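(* Let $k\ge1$ and $m\in\mathbb N$. If $A\subset\mathbb N$ is an SG$_k$ set, then $A\cap m\mathbb N$ is an SG$_k$ set. If $B\subset\mathbb N$ is an SG$_k^*$ set, then $B\cap m\mathbb N$ is an SG$_k^*$ set.
   Context: $\mathbb N=\{1,2,\dots\}$. For $k\ge0$, $\mathcal S_k$ is the family of finite non-empty $\alpha\subset\mathbb N$ such that for every $i\in\alpha$, either $i=\max\alpha$ or there is $j\in\alpha$ with $i<j\le i+k$. For a sequence $(n_i)$ of positive integers, $n_\alpha=\sum_{i\in\alpha}n_i$ and $\mathrm{SG}_k(n_i)=\{n_\alpha:\alpha\in\mathcal S_k\}$. A set $A\subset\mathbb N$ is SG$_k$ if $A\supseteq\mathrm{SG}_k(n_i)$ for some sequence $(n_i)$ of positive integers. A set $B\subset\mathbb N$ is SG$_k^*$ if $B\cap A\ne\emptyset$ for every SG$_k$ set $A$, equivalently if for every sequence $(n_i)$ of positive integers there is $\alpha\in\mathcal S_k$ with $n_\alpha\in B$. *)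

(* Defs.v *)
From mathcomp Require Import all_boot.
Set Implicit Arguments. Unset Strict Implicit. Unset Printing Implicit Defensive.

(* N = {1,2,...}.  Subsets of N are predicates on nat; membership of 0 is
   irrelevant/forbidden where needed.  A finite non-empty subset alpha of N
   is represented by a duplicate-free, non-empty list of positive naturals. *)

Definition inSk (k : nat) (alpha : seq nat) : Prop :=
  [/\ alpha <> [::], uniq alpha, (forall i, i \in alpha -> 0 < i) &
      forall i, i \in alpha ->
        i = \max_(j <- alpha) j \/ exists2 j, j \in alpha & i < j <= i + k].

Definition nsum (n : nat -> nat) (alpha : seq nat) : nat := \sum_(i <- alpha) n i.

Definition pos_seq (n : nat -> nat) : Prop := forall i, 0 < i -> 0 < n i.

Definition SGk (k : nat) (A : nat -> Prop) : Prop :=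
  (forall x, A x -> 0 < x) /\
  exists n : nat -> nat, pos_seq n /\
    forall alpha, inSk k alpha -> A (nsum n alpha).

Definition SGk_star (k : nat) (B : nat -> Prop) : Prop :=
  (forall x, B x -> 0 < x) /\
  forall A : nat -> Prop, SGk k A -> exists x, B x /\ A x.

Definition inter_mult (A : nat -> Prop) (m : nat) : nat -> Prop :=
  fun x => A x /\ exists2 t, 0 < t & x = m * t.

(* Main.v *)
From Stdlib Require Import Classical ClassicalEpsilon.
Require Import Defs.
From mathcomp Require Import all_boot.
From mathcomp Require Import zify.
Set Implicit Arguments. Unset Strict Implicit. Unset Printing Implicit Defensive.
Definition infP (P : nat -> Prop) := forall N, exists x, N <= x /\ P x.

Lemma inf_pigeon B : forall (P : nat -> Prop) (f : nat -> nat),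
  infP P -> (forall x, P x -> f x < B) ->
  exists w, infP (fun x => P x /\ f x = w).
Proof.
elim: B => [|B IH] P f hP hf.
  by case: (hP 0) => x [_ /hf].
case: (classic (infP (fun x => P x /\ f x = B))) => [h|h]; first by exists B.
have [N0 HN0] : exists N0, forall x, N0 <= x -> P x -> f x <> B.
  apply: NNPP => hn; apply: h => N.
  apply: NNPP => hn2; apply: hn; exists N => x hx Px fx.
  by apply: hn2; exists x.
have h1 : infP (fun x => N0 <= x /\ P x).
  move=> N; case: (hP (maxn N N0)) => x [hx Px]; exists x.
  by rewrite geq_max in hx; case/andP: hx => -> ->.
have h2 : forall x, N0 <= x /\ P x -> f x < B.
  move=> x [h0 Px]; have := hf x Px; have := HN0 x h0 Px; lia.
have [w hw] := IH _ f h1 h2.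
exists w => N; case: (hw N) => x [hx [[_ Px] fx]]; by exists x.
Qed.

Lemma multi_pigeon m (F : nat -> nat -> nat) k :
  (forall s x, F s x < m) ->
  exists P, infP P /\ forall x y, P x -> P y -> forall s, s < k -> F s x = F s y.
Proof.
move=> hF; elim: k => [|k [P [hP hPF]]].
  by exists (fun _ => True); split => // N; exists N.
have [w hw] := @inf_pigeon m P (F k) hP (fun x _ => hF k x).
exists (fun x => P x /\ F k x = w); split => // x y [Px Fx] [Py Fy] s hs.
case: (ltngtP s k) => [hsk|hsk|->]; [exact: hPF|lia|by rewrite Fx Fy].
Qed.

Lemma choose_seq P : infP P -> exists L : nat -> nat,
  (forall b, L b < L b.+1) /\ forall b, P (L b).
Proof.
move=> hP.
pose g N := proj1_sig (constructive_indefinite_description _ (hP N)).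
have hg N : N <= g N /\ P (g N) := proj2_sig (constructive_indefinite_description _ (hP N)).
exists (fun b => iter b (fun y => g y.+1) (g 0)); split.
  move=> b /=; have [h1 _] := hg (iter b (fun y => g y.+1) (g 0)).+1; exact: h1.
case=> [|b] /=; [exact: (proj2 (hg 0))|exact: (proj2 (hg _))].
Qed.

Lemma uniq_flat (J : nat -> seq nat) (Q : nat -> Prop) (s : seq nat) : uniq s ->
  (forall i, uniq (J i)) -> (forall i, i \in s -> Q i) ->
  (forall i i' x, Q i -> Q i' -> x \in J i -> x \in J i' -> i = i') ->
  uniq (flatten [seq J i | i <- s]).
Proof.
move=> + hu hQ hd; elim: s hQ => //= a s IH hQ /andP[aS us].
rewrite cat_uniq hu IH // ?andbT; last by move=> i hi; apply: hQ; rewrite inE hi orbT.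
apply/hasPn => x /flatten_mapP [i iS xi]; apply/negP => xa.
move: aS; rewrite (hd a i x _ _ xa xi) ?iS //; apply: hQ; rewrite inE ?eqxx ?iS ?orbT //.
Qed.

Lemma max_eq (s : seq nat) x : x \in s -> (forall y, y \in s -> y <= x) ->
  x = \max_(j <- s) j.
Proof.
move=> xs hy; apply/eqP; rewrite eqn_leq; apply/andP; split.
  exact: (@leq_bigmax_seq _ s xpredT (fun j => j) x xs isT).
by apply/bigmax_leqP_seq => i /hy.
Qed.
Section Constr.
Variables (k : nat) (L : nat -> nat).
Hypothesis hk : 0 < k.
Hypothesis Linc : forall b, L b < L b.+1.

Lemma Lmono b b' : b <= b' -> L b <= L b'.
Proof.
move/subnK <-; elim: (b' - b) => [|d IH] //.
by rewrite addSn; apply: leq_trans IH (ltnW (Linc _)).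
Qed.

Definition bb i := i.-1 %/ k.
Definition ss i := i.-1 %% k.
Definition J i := [seq 1 + k * T + ss i | T <- iota (L (bb i)) (L (bb i).+1 - L (bb i))].

Lemma memJ o i : (o \in J i) <->
  exists T, [/\ L (bb i) <= T, T < L (bb i).+1 & o = 1 + k * T + ss i].
Proof.
split.
  case/mapP => T; rewrite mem_iota subnKC ?(ltnW (Linc _)) // => /andP[h1 h2] ->.
  by exists T.
case=> T [h1 h2 ->]; apply/mapP; exists T => //.
by rewrite mem_iota subnKC ?(ltnW (Linc _)) // h1 h2.
Qed.

Lemma decomp i : 0 < i -> i = 1 + k * bb i + ss i /\ ss i < k.
Proof.
move=> hi; split; last exact: ltn_pmod.
rewrite /bb /ss; have := divn_eq i.-1 k; lia.
Qed.

Lemma ss_lt i : ss i < k.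
Proof. exact: ltn_pmod. Qed.

Lemma dm_uniq T T' s s' : s < k -> s' < k -> k * T + s = k * T' + s' -> T = T' /\ s = s'.
Proof.
move=> hs hs' e.
have e1 : (T * k + s) %/ k = (T' * k + s') %/ k by rewrite mulnC e mulnC.
have e2 : (T * k + s) %% k = (T' * k + s') %% k by rewrite mulnC e mulnC.
rewrite !divnMDl // !divn_small // !addn0 in e1.
by rewrite !modnMDl !modn_small in e2.
Qed.

Lemma J_disj i i' x : 0 < i -> 0 < i' -> x \in J i -> x \in J i' -> i = i'.
Proof.
move=> hi hi' /memJ [T [h1 h2 e]] /memJ [T' [h1' h2' e']].
have [eT es] : T = T' /\ ss i = ss i'.
  apply: dm_uniq; rewrite ?ss_lt //; lia.
subst T'.
have eb : bb i = bb i'.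
  case: (ltngtP (bb i) (bb i')) => // hb.
    have := Lmono hb; lia.
  have := Lmono hb; lia.
have [di _] := decomp hi; have [di' _] := decomp hi'.
by rewrite di di' eb es.
Qed.

Lemma J_uniq i : uniq (J i).
Proof.
rewrite map_inj_uniq ?iota_uniq // => x y /eqP.
by rewrite eqn_add2r eqn_add2l eqn_pmul2l // => /eqP.
Qed.

Lemma beta_Sk (alpha : seq nat) : inSk k alpha -> inSk k (flatten [seq J i | i <- alpha]).
Proof.
case=> ne ua pos hstep.
have memb o : reflect (exists2 i, i \in alpha & o \in J i) (o \in flatten [seq J i | i <- alpha]).
  exact: flatten_mapP.
split.
- case: alpha ne ua pos hstep memb => // a s _ _ _ _ memb => e.
  have : (1 + k * L (bb a) + ss a) \in flatten [seq J i | i <- a :: s].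
    apply/memb; exists a; first exact: mem_head.
    by apply/memJ; exists (L (bb a)); split.
  by rewrite e.
- apply: (@uniq_flat _ (fun i => 0 < i)) => //.
  + exact: J_uniq.
  + move=> i i' x h h'; exact: J_disj.
- by move=> o /memb [i _ /memJ [T [_ _ ->]]].
move=> o /memb [i ia /memJ [T [h1 h2 eo]]].
have hi := pos i ia; have [di si] := decomp hi.
set b := bb i in h1 h2 di *; set s := ss i in eo di si *.
case: (ltnP T.+1 (L b.+1)) => hT.
  right; exists (o + k); last lia.
  apply/memb; exists i => //; apply/memJ; rewrite -/b -/s; exists T.+1; split => //; first lia.
  by rewrite eo mulnS; lia.
have eT : T.+1 = L b.+1 by lia.
have oJ : o \in J i by apply/memJ; exists T; split.
case: (hstep i ia) => [imax|[j ja /andP[hij hjk]]].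
  left; apply: max_eq; first by apply/memb; exists i.
  move=> y /memb [i' i'a /memJ [T' [h1' h2' ey]]].
  have hi' := pos i' i'a; have [di' si'] := decomp hi'.
  have hle : i' <= i.
    by rewrite imax; exact: (@leq_bigmax_seq _ alpha xpredT (fun j => j) i' i'a isT).
  set b' := bb i' in h1' h2' di' *; set s' := ss i' in ey di' si' *.
  have hbb : b' <= b.
    have : k * b' < k * b.+1 by rewrite mulnS; lia.
    by rewrite ltn_pmul2l.
  case: (ltngtP b' b) => [hlt|hgt|heq]; [|lia|].
    have := Lmono hlt => hL.
    have : k * T'.+1 <= k * T by rewrite leq_pmul2l //; lia.
    rewrite mulnS; lia.
  have hss : s' <= s by rewrite heq in di'; lia.
  have : k * T' <= k * T by rewrite leq_pmul2l //; rewrite heq in h2'; lia.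
  lia.
have hj := pos j ja; have [dj sj] := decomp hj.
set b' := bb j in dj *; set s' := ss j in dj sj *.
have hb1 : b <= b'.
  have : k * b < k * b'.+1 by rewrite mulnS; lia.
  by rewrite ltn_pmul2l.
have hb2 : b' <= b.+1.
  have : k * b' < k * b.+2 by rewrite !mulnS; lia.
  by rewrite ltn_pmul2l.
have [eb|eb] : b' = b \/ b' = b.+1 by lia.
  have hs : s < s' by rewrite eb in dj; lia.
  right; exists (1 + k * T + s'); last lia.
  apply/memb; exists j => //; apply/memJ; exists T; split => //.
    by rewrite -/b' eb.
  by rewrite -/b' eb.
have hs : s' <= s by rewrite eb mulnS in dj; lia.
right; exists (1 + k * T.+1 + s'); last by rewrite eo mulnS; lia.
apply/memb; exists j => //; apply/memJ; exists T.+1; split => //.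
  by rewrite -/b' eb eT.
by rewrite -/b' eb eT.
Qed.
End Constr.
Lemma part1 (k m : nat) (hk : 1 <= k) (hm : 1 <= m) (A : nat -> Prop) :
  SGk k A -> SGk k (inter_mult A m).
Proof.
move=> [Apos [n [npos hA]]].
pose F s x := (\sum_(0 <= T < x) n (1 + k * T + s)) %% m.
have [P [hP hPF]] := @multi_pigeon m F k (fun s x => ltn_pmod _ hm).
have [L [Linc LP]] := choose_seq hP.
pose n' i := \sum_(o <- J k L i) n o.
have n'pos i : 0 < n' i.
  have x0J : (1 + k * L (bb k i) + ss k i) \in J k L i.
    by apply/(memJ k Linc); exists (L (bb k i)); split.
  rewrite /n' (bigD1_seq _ x0J (J_uniq L hk _)) /=.
  have := npos (1 + k * L (bb k i) + ss k i) isT; lia.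
have n'dvd i : m %| n' i.
  set a := L (bb k i); set c := L (bb k i).+1.
  have hac : a <= c by apply: ltnW; exact: Linc.
  have e : n' i = \sum_(a <= T < c) n (1 + k * T + ss k i) by rewrite /n' big_map.
  have e2 : \sum_(0 <= T < c) n (1 + k * T + ss k i) =
            \sum_(0 <= T < a) n (1 + k * T + ss k i) + n' i.
    by rewrite e (@big_cat_nat _ _ _ a) //.
  have hF := hPF _ _ (LP (bb k i)) (LP (bb k i).+1) (ss k i) (ss_lt hk i).
  rewrite /F in hF.
  have := eqn_mod_dvd m (leq_addr (n' i) (\sum_(0 <= T < a) n (1 + k * T + ss k i))).
  rewrite -e2 -/a -/c -hF eqxx;
  by rewrite e2 addKn => h; rewrite -h.
split; first by move=> x [/Apos].
exists n'; split; first by move=> i _.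
move=> alpha hal.
have hb := beta_Sk hk Linc hal.
have := hA _ hb.
have -> : nsum n (flatten [seq J k L i | i <- alpha]) = nsum n' alpha.
  by rewrite /nsum big_flatten /= big_map.
move=> hAx; split => //.
have hd : m %| nsum n' alpha by apply: dvdn_sum => i _.
have hp : 0 < nsum n' alpha.
  clear hb hAx hd; case: hal; case: alpha => // a s _ _ _ _; rewrite /nsum big_cons.
  have := n'pos a; lia.
exists (nsum n' alpha %/ m).
  by rewrite divn_gt0 // dvdn_leq.
by rewrite mulnC divnK.
Qed.

Theorem corollary3p3 (k m : nat) (hk : 1 <= k) (hm : 1 <= m) :
  (forall A : nat -> Prop, SGk k A -> SGk k (inter_mult A m)) /\
  (forall B : nat -> Prop, SGk_star k B -> SGk_star k (inter_mult B m)).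
Proof.
split; first by move=> A; exact: part1.
move=> B [Bpos hB]; split; first by move=> x [/Bpos].
move=> A hA.
have [x [Bx [Ax hx]]] := hB _ (part1 hk hm hA).
by exists x; split => //; split.
Qed.
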